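(* Assume (K1), (K2), (L), (W1)–(W3) and the exponent conditions $\frac1{q_\Phi}=\frac1{q_{\mathsf F}}+\frac1{q_{\mathsf P}}$, $q_\Phi>d$, $\tilde q>d$ with $\frac1{\tilde q}=\frac2{q_\gamma}+\frac1{q_{\mathsf G}}$. Then: (i) for every $C_P>0$ there exist $C_B>0$ and $\bar r>0$ such that for all $x\in\Omega$, all $P\in\mathrm{GL}^+(d)$ with $|P|+|P^{-1}|\le C_P$, all $F\in\mathrm{GL}^+(d)$ and all $N\in\mathbb R^{d\times d}$ with $|N-\mathbf 1|<\bar r$, $|B(x,F,NP)-B(x,F,P)|\le C_B|N-\mathbf 1|\,(W(x,FP^{-1})+1)$; (ii) for every $C_P>0$ there exist $C_W>0$ and $\tilde r>0$ such that for all $x\in\Omega$, all $P_1,P_2\in\mathrm{GL}^+(d)$ with $|P_1|+|P_1^{-1}|\le C_P$ and $|P_1-P_2|\le\tilde r$, and all $F\in\mathrm{GL}^+(d)$, $|W(x,FP_1^{-1})-W(x,FP_2^{-1})-B(x,F,P_1):(P_1-P_2)|\le C_W(W(x,FP_1^{-1})+1)|P_1-P_2|^2$.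
   Context: Notation: $A:C=\mathrm{tr}(AC^\top)$, $|A|$ Frobenius norm, $\mathbf 1$ identity, $\mathrm{GL}^+(d)=\{\det A>0\}$, $A^{-\top}=(A^{-1})^\top$, $\mathbb M(F)$ the vector of all minors of $F$ (length $\mu_d$). $\Omega\subset\mathbb R^d$ bounded Lipschitz domain, $T>0$, exponents $q_\Phi,q_{\mathsf F},q_{\mathsf P},q_{\mathsf G},q_\gamma>1$ with $q_{\mathsf G}>d$. (K1) $K:\mathbb R^{d\times d}\to(-\infty,\infty]$ is $C^2$ on $\mathrm{GL}^+(d)$; (K2) $K(P)\ge C_1(|P|^{q_{\mathsf P}}+\det(P)^{-q_\gamma})-C_2$ on $\mathrm{GL}^+(d)$, $C_1,C_2>0$, $q_{\mathsf P},q_\gamma>d$. (L) $\ell\in C^1([0,T];W^{1,q_\Phi}(\Omega;\mathbb R^d)^* )$. $W:\Omega\times\mathbb R^{d\times d}\to[0,\infty]$ with $W(x,F)<\infty$ iff $F\in\mathrm{GL}^+(d)$ and: (W1) there are $j\in L^1(\Omega)$, $q_{\mathsf F}>d$, $C_3>0$ with $W(x,F)\ge j(x)+C_3|F|^{q_{\mathsf F}}$; (W2) $W(x,F)=\mathbb W(x,\mathbb M(F))$ for a normal integrand $\mathbb W$ convex in its second variable; (W3) there are $\delta,C_4,C_5>0$ such that for all $x\in\Omega$, $F\in\mathrm{GL}^+(d)$, $N$ with $|N-\mathbf 1|<\delta$: $W(x,\cdot)$ is differentiable on $\mathrm{GL}^+(d)$, $|F^\top\mathrm D_FW(x,F)|\le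 C_4(W(x,F)+1)$, and $|F^\top\mathrm D_FW(x,F)-(FN)^\top\mathrm D_FW(x,FN)|\le C_5|N-\mathbf 1|(W(x,F)+1)$. $B(x,F,P):=-(FP^{-1})^\top\mathrm D_FW(x,FP^{-1})P^{-\top}$ for $F,P\in\mathrm{GL}^+(d)$. *)

(* Defs.v *)
From HB Require Import structures.
From mathcomp Require Import all_boot all_order all_algebra.
From mathcomp Require Import all_classical all_reals all_analysis.
Import Order.TTheory GRing.Theory Num.Theory.
Import numFieldNormedType.Exports.

Set Implicit Arguments.
Unset Strict Implicit.
Unset Printing Implicit Defensive.

Local Open Scope classical_set_scope.
Local Open Scope ring_scope.

Section Defs.
Variable R : realType.

Definition frob d (A : 'M[R]_d) : R := Num.sqrt (\sum_i \sum_j A i j ^+ 2).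

Definition frob_inner d (A C : 'M[R]_d) : R := \tr (A *m C^T).

Definition GLp d (A : 'M[R]_d) : Prop := 0 < \det A.

Definition grad d (f : 'M[R]_d -> R) (F : 'M[R]_d) : 'M[R]_d :=
  \matrix_(i, j) ('d f F (delta_mx i j : 'M[R]_d)).

(* real-valued version of W(x, .) (W is finite exactly on GL^+(d)) *)
Definition Wre d (W : 'rV[R]_d -> 'M[R]_d -> \bar R) (x : 'rV[R]_d)
  : 'M[R]_d -> R := fun G => fine (W x G).

Definition Bstress d (W : 'rV[R]_d -> 'M[R]_d -> \bar R) (x : 'rV[R]_d)
  (F P : 'M[R]_d) : 'M[R]_d :=
  - (((F *m invmx P)^T *m grad (Wre W x) (F *m invmx P)) *m (invmx P)^T).

Definition natmx d (F : 'M[R]_d) (i j : nat) : R :=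
  match (insub i : option 'I_d), (insub j : option 'I_d) with
  | Some i', Some j' => F i' j'
  | _, _ => 0
  end.

(* the minor of F with (increasingly ordered) row set I and column set J *)
Definition minor d (F : 'M[R]_d) (I J : {set 'I_d}) : R :=
  \det (\matrix_(a < #|I|, b < #|I|)
          natmx F (nth 0%N [seq val k | k <- enum I] a)
                  (nth 0%N [seq val k | k <- enum J] b)).

Definition mindex d := {p : {set 'I_d} * {set 'I_d} |
  (#|p.1| == #|p.2|) && (0 < #|p.1|)%N}.

Definition mu d : nat := #|{: mindex d}|.

Definition minors d (F : 'M[R]_d) : 'rV[R]_(mu d) :=
  \row_(k < mu d) (let p := val (@enum_val (mindex d) predT k) in
                   minor F p.1 p.2).

Definition econvex n (f : 'rV[R]_n -> \bar R) : Prop :=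
  forall (u v : 'rV[R]_n) (t : R), 0 <= t <= 1 ->
    (f ((1 - t) *: u + t *: v)%R <= ((1 - t)%:E * f u + t%:E * f v)%E)%E.

Definition C2_on d (U : set 'M[R]_d) (f : 'M[R]_d -> R) : Prop :=
  open U /\
  forall P, U P ->
    {for P, continuous f} /\
    forall u v : 'M[R]_d,
      derivable f P u /\
      {for P, continuous (fun Q => derive f Q u)} /\
      derivable (fun Q => derive f Q u) P v /\
      {for P, continuous (fun Q => derive (fun Q' => derive f Q' u) Q v)}.

End Defs.

(* Main.v *)
Require Import Defs.
From HB Require Import structures.
From mathcomp Require Import all_boot all_order all_algebra.
From mathcomp Require Import all_classical all_reals all_analysis.
From mathcomp Require Import ring lra.
Import Order.TTheory GRing.Theory Num.Theory.
Import numFieldNormedType.Exports.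
Local Open Scope classical_set_scope.
Local Open Scope ring_scope.

Section Fro.
Variable R : realType.
Local Set Implicit Arguments. Local Unset Strict Implicit.

Lemma sum_mul2 (I J : finType) (F : I -> R) (G : J -> R) :
  (\sum_i F i) * (\sum_j G j) = \sum_i \sum_j F i * G j.
Proof. by rewrite mulr_suml; apply: eq_bigr => i _; rewrite mulr_sumr. Qed.

Lemma lagrange (I : finType) (a b : I -> R) :
  (\sum_i a i * b i) ^+ 2 <= (\sum_i a i ^+ 2) * (\sum_i b i ^+ 2).
Proof.
have H : 0 <= \sum_i \sum_j (a i * b j - a j * b i) ^+ 2.
  by apply: sumr_ge0 => i _; apply: sumr_ge0 => j _; exact: sqr_ge0.
have E1 : forall i j, (a i * b j - a j * b i) ^+ 2 =
     a i ^+ 2 * b j ^+ 2 + b i ^+ 2 * a j ^+ 2 - 2 * ((a i * b i) * (a j * b j)).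
  by move=> i j; ring.
have E : \sum_i \sum_j (a i * b j - a j * b i) ^+ 2 =
   2 * ((\sum_i a i ^+ 2) * (\sum_i b i ^+ 2)) - 2 * (\sum_i a i * b i) ^+ 2.
  rewrite (eq_bigr _ (fun i _ => eq_bigr _ (fun j _ => E1 i j))).
  under eq_bigr do rewrite sumrB big_split /=.
  rewrite sumrB big_split /=.
  have S1 := sum_mul2 (fun i : I => a i ^+ 2) (fun j : I => b j ^+ 2).
  have S2 := sum_mul2 (fun i : I => b i ^+ 2) (fun j : I => a j ^+ 2).
  have S3 := sum_mul2 (fun i : I => a i * b i) (fun j : I => a j * b j).
  rewrite /= in S1 S2 S3.
  rewrite -S1 -S2.
  rewrite [X in _ - X](eq_bigr (fun i => 2 * \sum_j ((a i * b i) * (a j * b j)))); last first.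
    by move=> i _; rewrite mulr_sumr.
  rewrite -mulr_sumr -S3 expr2 [(\sum_i b i ^+ 2) * _]mulrC; ring.
rewrite E subr_ge0 in H.
by rewrite -(ler_pM2l (_ : 0 < 2)) //.
Qed.
End Fro.

Section Fro2.
Variable R : realType.
Local Set Implicit Arguments. Local Unset Strict Implicit.

Definition fro m n (A : 'M[R]_(m, n)) : R := Num.sqrt (\sum_i \sum_j A i j ^+ 2).

Lemma frobE d (A : 'M[R]_d) : frob A = fro A. Proof. by []. Qed.

Lemma fro_ge0 m n (A : 'M[R]_(m, n)) : 0 <= fro A.
Proof. exact: sqrtr_ge0. Qed.

Lemma sumsq_ge0 m n (A : 'M[R]_(m, n)) : 0 <= \sum_i \sum_j A i j ^+ 2.
Proof. by apply: sumr_ge0 => i _; apply: sumr_ge0 => j _; exact: sqr_ge0. Qed.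

Lemma fro_sq m n (A : 'M[R]_(m, n)) : fro A ^+ 2 = \sum_i \sum_j A i j ^+ 2.
Proof. by rewrite sqr_sqrtr // sumsq_ge0. Qed.

Lemma fro_le m n (A : 'M[R]_(m, n)) c : 0 <= c ->
  \sum_i \sum_j A i j ^+ 2 <= c ^+ 2 -> fro A <= c.
Proof.
move=> c0 h; rewrite -(ler_pXn2r (_ : (0 < 2)%N)) ?nnegrE ?fro_ge0 //.
by rewrite fro_sq.
Qed.

Lemma fro_tr m n (A : 'M[R]_(m, n)) : fro A^T = fro A.
Proof.
by rewrite /fro exchange_big /=; congr Num.sqrt; apply: eq_bigr => i _;
  apply: eq_bigr => j _; rewrite mxE.
Qed.

Lemma fro_scale m n (A : 'M[R]_(m, n)) c : fro (c *: A) = `|c| * fro A.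
Proof.
rewrite /fro -sqrtr_sqr -sqrtrM ?sqr_ge0 //; congr Num.sqrt.
rewrite mulr_sumr; apply: eq_bigr => i _; rewrite mulr_sumr; apply: eq_bigr => j _.
by rewrite mxE exprMn.
Qed.

Lemma fro_opp m n (A : 'M[R]_(m, n)) : fro (- A) = fro A.
Proof. by rewrite -scaleN1r fro_scale normrN normr1 mul1r. Qed.

Lemma fro_entry m n (A : 'M[R]_(m, n)) i j : `|A i j| <= fro A.
Proof.
rewrite -(ler_pXn2r (_ : (0 < 2)%N)) ?nnegrE ?fro_ge0 // fro_sq real_normK ?num_real //.
rewrite (bigD1 i) //= (bigD1 j) //= -addrA lerDl.
apply: addr_ge0; first by apply: sumr_ge0 => k _; exact: sqr_ge0.
by apply: sumr_ge0 => k _; apply: sumr_ge0 => l _; exact: sqr_ge0.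
Qed.

Lemma fro_cs m n (A B : 'M[R]_(m, n)) :
  \sum_i \sum_j A i j * B i j <= fro A * fro B.
Proof.
pose a (p : 'I_m * 'I_n) := A p.1 p.2.
pose b (p : 'I_m * 'I_n) := B p.1 p.2.
have h := lagrange a b.
have E1 : \sum_p a p * b p = \sum_i \sum_j A i j * B i j by rewrite pair_big.
have E2 : \sum_p a p ^+ 2 = \sum_i \sum_j A i j ^+ 2 by rewrite pair_big.
have E3 : \sum_p b p ^+ 2 = \sum_i \sum_j B i j ^+ 2 by rewrite pair_big.
rewrite E1 E2 E3 -!fro_sq -exprMn in h.
case: (lerP 0 (\sum_i \sum_j A i j * B i j)) => hs.
  by rewrite -(ler_pXn2r (_ : (0 < 2)%N)) ?nnegrE ?mulr_ge0 ?fro_ge0.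
exact: le_trans (ltW hs) (mulr_ge0 (fro_ge0 _) (fro_ge0 _)).
Qed.

Lemma fro_add m n (A B : 'M[R]_(m, n)) : fro (A + B) <= fro A + fro B.
Proof.
apply: fro_le; first by rewrite addr_ge0 ?fro_ge0.
have E : \sum_i \sum_j (A + B) i j ^+ 2 =
  \sum_i \sum_j A i j ^+ 2 + 2 * \sum_i \sum_j A i j * B i j + \sum_i \sum_j B i j ^+ 2.
  rewrite mulr_sumr -!big_split /=; apply: eq_bigr => i _.
  rewrite mulr_sumr -!big_split /=; apply: eq_bigr => j _.
  rewrite mxE; ring.
rewrite E -!fro_sq.
have := fro_cs A B; nra.
Qed.

Lemma fro_sub m n (A B : 'M[R]_(m, n)) : fro (A - B) <= fro A + fro B.
Proof. by rewrite -(fro_opp B) fro_add. Qed.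

Lemma fro_mul m n p (A : 'M[R]_(m, n)) (B : 'M[R]_(n, p)) :
  fro (A *m B) <= fro A * fro B.
Proof.
apply: fro_le; first by rewrite mulr_ge0 ?fro_ge0.
rewrite exprMn !fro_sq.
have E : (\sum_i \sum_j A i j ^+ 2) * (\sum_i \sum_j B i j ^+ 2) =
   \sum_i \sum_k ((\sum_j A i j ^+ 2) * (\sum_j B j k ^+ 2)).
  rewrite [X in _ * X](exchange_big) /=.
  by rewrite sum_mul2.
rewrite E; apply: ler_sum => i _; apply: ler_sum => k _.
rewrite mxE; exact: lagrange.
Qed.

Lemma fro_gt0 m n (A : 'M[R]_(m, n)) : A != 0 -> 0 < fro A.
Proof.
move=> nz; rewrite lt_neqAle fro_ge0 andbT; apply/negP => /eqP h.
move/negP: nz; apply; apply/eqP/matrixP => i j; rewrite mxE.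
have := fro_entry A i j; rewrite -h => h2.
by apply/eqP; rewrite -normr_le0.
Qed.

End Fro2.

Section Mx.
Variable R : realType.
Local Set Implicit Arguments. Local Unset Strict Implicit.

Lemma frob_innerE d (A B : 'M[R]_d) :
  frob_inner A B = \sum_i \sum_j A i j * B i j.
Proof.
rewrite /frob_inner /mxtrace; apply: eq_bigr => i _; rewrite mxE.
by apply: eq_bigr => j _; rewrite mxE.
Qed.

Lemma frob_inner_le d (A B : 'M[R]_d) : `|frob_inner A B| <= fro A * fro B.
Proof.
rewrite frob_innerE ler_norml fro_cs andbT.
rewrite lerNl -(fro_opp A).
apply: le_trans (fro_cs _ _); rewrite -sumrN; apply: ler_sum => i _.
rewrite -sumrN; apply: ler_sum => j _; rewrite mxE; lra.
Qed.

Lemma det1E_neq0 d (E : 'M[R]_d) : fro E < 1 -> \det (1%:M + E) != 0.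
Proof.
move=> hE; apply/negP => /det0P [v nz hv].
have h2 : v + v *m E = 0 by rewrite -[v in v + _]mulmx1 -mulmxDr.
have : v = - (v *m E) by apply/eqP; rewrite -subr_eq0 opprK h2.
move=> ev.
have := fro_mul v E; rewrite -fro_opp -ev => h.
have hv0 := fro_gt0 nz.
have : fro v * 1 <= fro v * fro E by rewrite mulr1.
by rewrite ler_pM2l // leNgt hE.
Qed.

Lemma det1E_gt0 d (E : 'M[R]_d) : fro E < 1 -> 0 < \det (1%:M + E).
Proof.
move=> hE.
pose P : {poly R} := \det (\matrix_(i, j) (((i == j)%:R)%:P + 'X * (E i j)%:P)).
have qE : forall t, P.[t] = \det (1%:M + t *: E).
  move=> t; rewrite -horner_evalE /P -det_map_mx; congr (\det _).
  by apply/matrixP => i j; rewrite !mxE /= horner_evalE hornerD hornerM hornerX !hornerC.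
rewrite ltNge; apply/negP => h1.
have := @IVT R (horner P) 0 1 0 ler01.
case.
- exact/continuous_subspaceT/continuous_horner.
- rewrite !qE scale0r addr0 det1 scale1r.
  by rewrite ge_min le_max h1 ler01 !orbT.
move=> c; rewrite in_itv /= => /andP [c0 c1] hc.
have : \det (1%:M + c *: E) != 0.
  apply: det1E_neq0; rewrite fro_scale ger0_norm //.
  by apply: le_lt_trans hE; rewrite ler_piMl ?fro_ge0.
by rewrite -qE hc eqxx.
Qed.

Lemma unitmx_det_gt0 d (A : 'M[R]_d) : 0 < \det A -> A \in unitmx.
Proof. by move=> h; rewrite unitmxE unitfE gt_eqF. Qed.

Lemma invmxM d (A B : 'M[R]_d) : A \in unitmx -> B \in unitmx ->
  invmx (A *m B) = invmx B *m invmx A.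
Proof.
move=> uA uB; have uAB : A *m B \in unitmx by rewrite unitmx_mul uA.
have h : (A *m B) *m (invmx B *m invmx A) = 1%:M.
  by rewrite mulmxA (mulmxK uB) mulmxV.
by rewrite -[LHS]mulmx1 -h mulmxA mulVmx // mul1mx.
Qed.

Lemma inv_near1 d (E : 'M[R]_d) : fro E <= 1/2 ->
  (1%:M + E) \in unitmx /\ fro (invmx (1%:M + E) - 1%:M) <= 2 * fro E.
Proof.
move=> hE; have uN : (1%:M + E) \in unitmx.
  by apply: unitmx_det_gt0; apply: det1E_gt0; lra.
split=> //; set M := invmx _.
have e1 : M - 1%:M = - (E *m M).
  have h : (1%:M + E) *m M = 1%:M := mulmxV uN.
  by rewrite -[X in _ - X]h mulmxDl mul1mx opprD addrA subrr add0r.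
have e2 : E *m M = E + E *m (M - 1%:M) by rewrite mulmxBr mulmx1 addrCA subrr addr0.
have := fro_add E (E *m (M - 1%:M)); rewrite -e2 -fro_opp -e1.
have := fro_mul E (M - 1%:M).
have := fro_ge0 (M - 1%:M); have := fro_ge0 E.
nra.
Qed.

Lemma fro_split d (M : 'M[R]_d) : fro M <= fro (1%:M : 'M[R]_d) + fro (M - 1%:M).
Proof. by rewrite -{1}(subrK 1%:M M) addrC fro_add. Qed.

End Mx.

Section Deriv.
Variable R : realType.
Local Set Implicit Arguments. Local Unset Strict Implicit.

Lemma diff_grad d (f : 'M[R]_d -> R) (X H : 'M[R]_d) :
  'd f X H = frob_inner (grad f X) H.
Proof.
rewrite frob_innerE {1}(matrix_sum_delta H) linear_sum; apply: eq_bigr => i _.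
rewrite linear_sum; apply: eq_bigr => j _; rewrite linearZ /= /grad mxE.
by rewrite mulrC.
Qed.

Lemma path_MVT d (f : 'M[R]_d -> R) (G H : 'M[R]_d) :
  (forall t, 0 <= t <= 1 -> differentiable f (G + t *: H)) ->
  exists2 c, 0 < c < 1 & f (G + H) - f G = 'd f (G + c *: H) H.
Proof.
move=> hd.
pose inner := fun t : R => G + t *: H.
have ei : inner = cst G + (fun t => t *: H) by [].
have dinner : forall t, differentiable inner t.
  by move=> t; rewrite ei; apply: differentiableD.
have dZ : forall t, differentiable (fun s : R => s *: H) t.
  by move=> t; exact: (@differentiableZl R R _ id H t).
have dinner1 : forall t, 'd inner t 1 = H.
  move=> t; rewrite ei (diffD (differentiable_cst G t) (dZ t)).
  have h1 : ('d (cst G) t : R -> 'M[R]_d) = 0 := diff_cst _ _.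
  have dI : differentiable (@id R) t by [].
  have h2 := @diffZl R R _ id H t dI.
  have h3 : ('d (@id R) t : R -> R) = id := @diff_val _ _ _ _ _ _ _ (is_diff_id t).
  have k1 : 'd (cst G) t 1 = 0 := congr1 (fun g => g 1) h1.
  have k2 : 'd ( *:%R^~ H) t 1 = 'd (@id R) t 1 *: H := congr1 (fun g => g 1) h2.
  have k3 : 'd (@id R) t 1 = 1 := congr1 (fun g => g 1) h3.
  transitivity ('d (cst G) t 1 + 'd ( *:%R^~ H) t 1); first by [].
  have K : forall a b : 'M[R]_d, a = 0 -> b = H -> a + b = H.
    by move=> a b -> ->; rewrite add0r.
  apply: K; first exact: k1.
  exact: (eq_trans k2 (eq_trans (congr1 (fun s => s *: H) k3) (scale1r H))).

pose phi := f \o inner.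
have dphi : forall t : R, 0 <= t <= 1 -> differentiable phi t.
  by move=> t ht; apply: differentiable_comp => //; apply: hd.
have := @MVT R phi (fun t => 'd f (G + t *: H) H) 0 1 ltr01.
case.
- move=> t; rewrite in_itv /= => /andP [t0 t1].
  have ht : 0 <= t <= 1 by rewrite !ltW.
  have e1 : 'D_1 phi t = 'd phi t 1 := @deriveE _ _ _ phi t 1 (dphi t ht).
  have e2 : ('d phi t : R -> R) = 'd f (inner t) \o 'd inner t :=
    diff_comp (dinner t) (hd t ht).
  have e3 : 'd phi t 1 = 'd f (inner t) ('d inner t 1) := congr1 (fun g => g 1) e2.
  have e4 : 'D_1 phi t = 'd f (G + t *: H) H.
    by rewrite e1 e3 dinner1.
  rewrite -e4; exact: derivableP (@diff_derivable _ _ _ phi t 1 (dphi t ht)).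
- apply: derivable_within_continuous => t; rewrite in_itv /= => ht.
  by apply: (@diff_derivable _ _ _ phi t 1); apply: dphi.
move=> c; rewrite in_itv /= => hc.
rewrite /phi /inner /= scale1r scale0r addr0 subr0 mulr1 => ->.
by exists c.
Qed.

End Deriv.

Section PartI.
Variable R : realType.
Local Set Implicit Arguments. Local Unset Strict Implicit.

Lemma fiBl d (A B C : 'M[R]_d) :
  frob_inner (A - B) C = frob_inner A C - frob_inner B C.
Proof. by rewrite /frob_inner mulmxBl linearB. Qed.

Lemma fiBr d (A B C : 'M[R]_d) :
  frob_inner A (B - C) = frob_inner A B - frob_inner A C.
Proof. by rewrite /frob_inner linearB /= mulmxBr linearB. Qed.

Lemma fiNl d (A C : 'M[R]_d) : frob_inner (- A) C = - frob_inner A C.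
Proof. by rewrite /frob_inner mulNmx linearN. Qed.

Lemma fi_mulr d (A B C : 'M[R]_d) :
  frob_inner A (B *m C) = frob_inner (B^T *m A) C.
Proof.
by rewrite /frob_inner trmx_mul mulmxA mxtrace_mulC !mulmxA.
Qed.

Lemma fi_mulTr d (A C D : 'M[R]_d) :
  frob_inner (A *m C^T) D = frob_inner A (D *m C).
Proof. by rewrite /frob_inner trmx_mul mulmxA. Qed.

Lemma finvP_le d (P : 'M[R]_d) CP : frob P + frob (invmx P) <= CP ->
  fro (invmx P) <= CP.
Proof. by move=> h; have := fro_ge0 P; rewrite -!frobE in h *; lra. Qed.

Lemma bound5 (a b s m q A B S M Q : R) :
  0 <= a -> 0 <= b -> 0 <= s -> 0 <= m -> 0 <= q ->
  a <= A -> b <= B -> s <= S -> m <= M -> q <= Q ->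
  (a * b + s * m) * q <= (A * B + S * M) * Q.
Proof.
move=> a0 b0 s0 m0 q0 aA bB sS mM qQ.
apply: ler_pM => //; first by rewrite addr_ge0 ?mulr_ge0.
by apply: lerD; apply: ler_pM.
Qed.

Lemma boundB d (S1 S0 M Q : 'M[R]_d) :
  fro (- (S1 *m M^T *m Q) - - (S0 *m Q)) <=
  (fro (S1 - S0) * fro M^T + fro S0 * fro (M^T - 1%:M)) * fro Q.
Proof.
have e2 : - (S1 *m M^T *m Q) - - (S0 *m Q) =
   - (((S1 - S0) *m M^T + S0 *m (M^T - 1%:M)) *m Q).
  by rewrite mulmxBr mulmx1 mulmxBl addrA subrK mulmxBl opprB opprK addrC.
rewrite e2 fro_opp.
apply: le_trans (fro_mul _ _) _.
apply: ler_pM; rewrite ?fro_ge0 //.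
apply: le_trans (fro_add _ _) _.
by apply: lerD; apply: fro_mul.
Qed.

Lemma bnd3 (C5 a b w : R) : 0 < C5 -> 0 <= w -> 0 <= a -> a <= b ->
  C5 * a * (w + 1) <= C5 * b * (w + 1).
Proof. by move=> *; rewrite ler_wpM2r ?ler_wpM2l //; [lra|lra]. Qed.

Lemma fin_eq (C5 c1 C4 CP e w : R) :
  (C5 * (2 * e) * (w + 1) * (c1 + 1) + C4 * (w + 1) * (2 * e)) * CP <=
  (2 * C5 * (c1 + 1) + 2 * C4) * CP * e * (w + 1).
Proof. by rewrite le_eqVlt; apply/orP; left; apply/eqP; ring. Qed.

Lemma part_i d (Omega : set 'rV[R]_d) (W : 'rV[R]_d -> 'M[R]_d -> \bar R)
  (delta C4 C5 : R) : 0 < delta -> 0 < C4 -> 0 < C5 ->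
  (forall x, Omega x -> forall F, (0 <= W x F)%E) ->
  (forall x, Omega x -> forall F, GLp F ->
       differentiable (Wre W x) F /\
       frob (F^T *m grad (Wre W x) F) <= C4 * (Wre W x F + 1) /\
       forall N, frob (N - 1%:M) < delta -> GLp (F *m N) ->
         frob (F^T *m grad (Wre W x) F
               - (F *m N)^T *m grad (Wre W x) (F *m N))
           <= C5 * frob (N - 1%:M) * (Wre W x F + 1)) ->
  (forall CP : R, 0 < CP -> exists CB rbar : R, 0 < CB /\ 0 < rbar /\
     forall x, Omega x -> forall P, GLp P -> frob P + frob (invmx P) <= CP ->
     forall F, GLp F -> forall N : 'M[R]_d, frob (N - 1%:M) < rbar ->
       frob (Bstress W x F (N *m P) - Bstress W x F P)
         <= CB * frob (N - 1%:M) * (Wre W x (F *m invmx P) + 1)).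
Proof.
move=> hdel hC4 hC5 W0 hW3 CP hCP.
pose c1 := fro (1%:M : 'M[R]_d).
have c10 : 0 <= c1 by exact: fro_ge0.
exists ((2 * C5 * (c1 + 1) + 2 * C4) * CP), (Num.min (1/2) (delta/2)).
split; first by rewrite mulr_gt0 // addr_gt0 // ?mulr_gt0 // ltr_pwDr.
split; first by rewrite lt_min; apply/andP; split; lra.
move=> x xO P hP hPC F hF N; rewrite lt_min => /andP [hE1 hE2].
have hE1' : fro (N - 1%:M) < 1/2 by exact: hE1.
have hE2' : fro (N - 1%:M) < delta/2 by exact: hE2.
clear hE1 hE2.
have eN : N = 1%:M + (N - 1%:M) by rewrite addrC subrK.
have [uN hM] := inv_near1 (ltW hE1').
rewrite -eN in uN hM.
set M := invmx N in hM *.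
have dN : 0 < \det N by rewrite eN; apply: det1E_gt0; apply: lt_trans hE1' _; lra.
have uP : P \in unitmx by exact: unitmx_det_gt0.
set G := F *m invmx P.
have hG : GLp G by rewrite /GLp /G det_mulmx det_inv mulr_gt0 // invr_gt0.
have hGM : GLp (G *m M) by rewrite /GLp det_mulmx /M det_inv mulr_gt0 // invr_gt0.
have [_ [hS0 hW]] := hW3 x xO G hG.
have hMd : frob (M - 1%:M) < delta.
  rewrite frobE; apply: le_lt_trans hM _; lra.
have hS := hW M hMd hGM.
have e1 : Bstress W x F (N *m P) =
   - ((((G *m M)^T *m grad (Wre W x) (G *m M)) *m M^T) *m (invmx P)^T).
  rewrite /Bstress invmxM //.
  rewrite (mulmxA F (invmx P) (invmx N)) -/G -/M (trmx_mul (invmx P) M).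
  by rewrite mulmxA.
rewrite e1 /Bstress -/G.
set S1 := (G *m M)^T *m _.
set S0 := G^T *m _.
set Q := (invmx P)^T.
rewrite frobE; apply: le_trans (boundB S1 S0 M Q) _.
set w := Wre W x G.
have w0 : 0 <= w by apply: fine_ge0; apply: W0.
have hq : fro Q <= CP by rewrite /Q fro_tr; exact: finvP_le.
have hMT : fro M^T <= c1 + 1.
  rewrite fro_tr; apply: le_trans (fro_split M) _; rewrite lerD2l.
  apply: le_trans hM _; lra.
have hMT1 : fro (M^T - 1%:M) <= 2 * fro (N - 1%:M).
  have -> : M^T - 1%:M = (M - 1%:M)^T by rewrite linearB /= trmx1.
  by rewrite fro_tr.
have hS10 : fro (S1 - S0) <= C5 * (2 * fro (N - 1%:M)) * (w + 1).
  rewrite -fro_opp opprB -frobE; apply: le_trans hS _.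
  apply: bnd3 => //.
  exact: fro_ge0.
have hS0' : fro S0 <= C4 * (w + 1) by rewrite -frobE.
apply: le_trans (bound5 (fro_ge0 _) (fro_ge0 _) (fro_ge0 _) (fro_ge0 _) (fro_ge0 _)
   hS10 hMT hS0' hMT1 hq) _.
exact: fin_eq.
Qed.

End PartI.

Section PartII.
Variable R : realType.
Local Set Implicit Arguments. Local Unset Strict Implicit.

Lemma scal_ii (a1 b1 a2 b2 b3 e w dl C4 C5 c1 K2 CP : R) :
  0 <= a1 -> 0 <= b1 -> 0 <= a2 -> 0 <= b2 -> 0 <= b3 -> 0 <= e -> 0 <= w ->
  0 <= dl -> 0 < C4 -> 0 < C5 -> 0 <= c1 -> 0 <= K2 -> 0 <= CP ->
  a1 <= C5 * e * (w + 1) -> b1 <= (c1 + 1) * e -> a2 <= C4 * (w + 1) ->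
  b2 <= 2 * e * e -> b3 <= dl * K2 * dl * CP -> e <= K2 * dl ->
  a1 * b1 + a2 * b2 + a2 * b3 <=
  (C5 * K2 ^+ 2 * (c1 + 1) + 2 * C4 * K2 ^+ 2 + C4 * K2 * CP) * (w + 1) * dl ^+ 2.
Proof.
move=> a10 b10 a20 b20 b30 e0 w0 dl0 C40 C50 c10 K20 CP0 ha1 hb1 ha2 hb2 hb3 he.
have w1 : 0 <= w + 1 by lra.
have ee : e * e <= (K2 * dl) * (K2 * dl) by apply: ler_pM.
have t1 : a1 * b1 <= (C5 * e * (w + 1)) * ((c1 + 1) * e).
  by apply: ler_pM.
have t2 : a2 * b2 <= (C4 * (w + 1)) * (2 * e * e) by apply: ler_pM.
have t3 : a2 * b3 <= (C4 * (w + 1)) * (dl * K2 * dl * CP) by apply: ler_pM.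
have u1 : (C5 * e * (w + 1)) * ((c1 + 1) * e) = (C5 * (c1 + 1) * (w + 1)) * (e * e) by ring.
have u2 : (C4 * (w + 1)) * (2 * e * e) = (2 * C4 * (w + 1)) * (e * e) by ring.
have v1 : (C5 * (c1 + 1) * (w + 1)) * (e * e) <= (C5 * (c1 + 1) * (w + 1)) * ((K2 * dl) * (K2 * dl)).
  by apply: ler_wpM2l => //; rewrite !mulr_ge0 //; lra.
have v2 : (2 * C4 * (w + 1)) * (e * e) <= (2 * C4 * (w + 1)) * ((K2 * dl) * (K2 * dl)).
  by apply: ler_wpM2l => //; rewrite !mulr_ge0 //; lra.
have fin : (C5 * (c1 + 1) * (w + 1)) * ((K2 * dl) * (K2 * dl)) +
   (2 * C4 * (w + 1)) * ((K2 * dl) * (K2 * dl)) + (C4 * (w + 1)) * (dl * K2 * dl * CP) =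
  (C5 * K2 ^+ 2 * (c1 + 1) + 2 * C4 * K2 ^+ 2 + C4 * K2 * CP) * (w + 1) * dl ^+ 2 by ring.
rewrite -fin; rewrite u1 in t1; rewrite u2 in t2.
by apply: lerD; [apply: lerD|]; [apply: le_trans t1 v1|apply: le_trans t2 v2|].
Qed.

Lemma mat_ii d (Sc S0 Mc E D iP1 iP2 : 'M[R]_d) (w e dl C4 C5 c1 K2 CP : R) :
  0 <= w -> 0 < C4 -> 0 < C5 -> 0 <= c1 -> 0 <= K2 -> 0 <= CP ->
  E = D *m iP2 -> iP1 - iP2 = - (iP2 *m D *m iP1) ->
  fro (Sc - S0) <= C5 * fro E * (w + 1) -> fro S0 <= C4 * (w + 1) ->
  fro (Mc - 1%:M) <= 2 * fro E -> fro Mc <= c1 + 1 ->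
  fro E <= K2 * fro D -> fro iP2 <= K2 -> fro iP1 <= CP ->
  `| - frob_inner Sc (Mc *m E) + frob_inner S0 (D *m iP1) | <=
  (C5 * K2 ^+ 2 * (c1 + 1) + 2 * C4 * K2 ^+ 2 + C4 * K2 * CP) * (w + 1) * fro D ^+ 2.
Proof.
move=> w0 C40 C50 c10 K20 CP0 eE eP hS hS0 hM hMc hE hP2 hP1.
have dec : - frob_inner Sc (Mc *m E) + frob_inner S0 (D *m iP1) =
  - frob_inner (Sc - S0) (Mc *m E) - frob_inner S0 ((Mc - 1%:M) *m E)
  - frob_inner S0 (D *m iP2 *m D *m iP1).
  have k1 : (Mc - 1%:M) *m E = Mc *m E - E by rewrite mulmxBl mul1mx.
  have k2 : D *m iP2 *m D *m iP1 = E - D *m iP1.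
    have h : D *m (iP1 - iP2) = - (D *m iP2 *m D *m iP1) by rewrite eP mulmxN !mulmxA.
    rewrite mulmxBr in h.
    by rewrite eE -[LHS]opprK -h opprB.
  rewrite k1 k2 fiBl !fiBr; ring.
rewrite dec.
apply: le_trans (ler_normB _ _) _.
apply: le_trans (lerD (ler_normB _ _) (lexx _)) _.
rewrite normrN.
apply: le_trans (lerD (lerD (frob_inner_le _ _) (frob_inner_le _ _)) (frob_inner_le _ _)) _.
apply: scal_ii (hS) _ hS0 _ _ hE; rewrite ?fro_ge0 //.
- by apply: le_trans (fro_mul _ _) _; apply: ler_pM; rewrite ?fro_ge0.
- apply: le_trans (fro_mul _ _) _.
  by rewrite mulrAC; apply: ler_pM; rewrite ?fro_ge0.
- apply: le_trans (fro_mul _ _) _; apply: ler_pM; rewrite ?fro_ge0 //.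
  apply: le_trans (fro_mul _ _) _; apply: ler_pM; rewrite ?fro_ge0 //.
  by apply: le_trans (fro_mul _ _) _; apply: ler_pM; rewrite ?fro_ge0.
Qed.

End PartII.

Section PartII2.
Variable R : realType.
Local Set Implicit Arguments. Local Unset Strict Implicit.


Lemma split_bound (a b e x : R) : 0 < a -> 0 < b -> 0 <= e -> x <= e / (a + b) ->
  0 <= x -> a * x <= e /\ b * x <= e.
Proof.
move=> a0 b0 e0 hx x0.
have ab : 0 < a + b by lra.
have h : (a + b) * x <= e by rewrite mulrC -ler_pdivlMr.
have h1 : a * x <= (a + b) * x by rewrite ler_wpM2r //; lra.
have h2 : b * x <= (a + b) * x by rewrite ler_wpM2r //; lra.
by split; [apply: le_trans h1 h|apply: le_trans h2 h].
Qed.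

Lemma eGH d (F P1 P2 : 'M[R]_d) : P1 \in unitmx -> P2 \in unitmx ->
  F *m invmx P1 + (F *m invmx P1) *m ((P1 - P2) *m invmx P2) = F *m invmx P2.
Proof.
move=> u1 u2; rewrite mulmxBl (mulmxV u2) mulmxBr mulmx1.
rewrite -(mulmxA F (invmx P1) (P1 *m invmx P2)) (mulKmx u1).
by rewrite addrC subrK.
Qed.

Lemma iP_diff d (P1 P2 : 'M[R]_d) : P1 \in unitmx -> P2 \in unitmx ->
  invmx P1 - invmx P2 = - (invmx P2 *m (P1 - P2) *m invmx P1).
Proof.
move=> u1 u2; rewrite mulmxBr mulmxBl (mulmxK u1) (mulVmx u2) mul1mx.
by rewrite opprB.
Qed.

Lemma eP2 d (P1 P2 : 'M[R]_d) : P1 \in unitmx ->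
  P2 = P1 *m (1%:M + - (invmx P1 *m (P1 - P2))).
Proof.
move=> u1; rewrite mulmxDr mulmx1 mulmxN (mulKVmx u1).
by rewrite opprB addrC subrK.
Qed.

Lemma eHc d (G E N : 'M[R]_d) : N \in unitmx ->
  G *m E = (G *m N) *m (invmx N *m E).
Proof. by move=> u; rewrite -mulmxA (mulKVmx u). Qed.

Lemma eGt d (G E : 'M[R]_d) (t : R) : G + t *: (G *m E) = G *m (1%:M + t *: E).
Proof. by rewrite mulmxDr mulmx1 scalemxAr. Qed.

Lemma eNc d (E : 'M[R]_d) (t : R) : (1%:M + t *: E) - 1%:M = t *: E.
Proof. by rewrite addrC addKr. Qed.

Lemma fro_tE d (E : 'M[R]_d) (t : R) : 0 <= t <= 1 -> fro (t *: E) <= fro E.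
Proof.
move=> /andP [t0 t1]; rewrite fro_scale ger0_norm //.
by rewrite ler_piMl ?fro_ge0.
Qed.

Lemma fro_inv_le d (E : 'M[R]_d) : fro E <= 1/2 ->
  fro (invmx (1%:M + E)) <= fro (1%:M : 'M[R]_d) + 1.
Proof.
move=> h; have [_ h2] := inv_near1 h.
apply: le_trans (fro_split _) _; rewrite lerD2l; apply: le_trans h2 _; lra.
Qed.

End PartII2.

Section PartII3.
Variable R : realType.
Local Set Implicit Arguments. Local Unset Strict Implicit.

Lemma part_ii d (Omega : set 'rV[R]_d) (W : 'rV[R]_d -> 'M[R]_d -> \bar R)
  (delta C4 C5 : R) : 0 < delta -> 0 < C4 -> 0 < C5 ->
  (forall x, Omega x -> forall F, (0 <= W x F)%E) ->
  (forall x, Omega x -> forall F, GLp F ->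
       differentiable (Wre W x) F /\
       frob (F^T *m grad (Wre W x) F) <= C4 * (Wre W x F + 1) /\
       forall N, frob (N - 1%:M) < delta -> GLp (F *m N) ->
         frob (F^T *m grad (Wre W x) F
               - (F *m N)^T *m grad (Wre W x) (F *m N))
           <= C5 * frob (N - 1%:M) * (Wre W x F + 1)) ->
  (forall CP : R, 0 < CP -> exists CW rtilde : R, 0 < CW /\ 0 < rtilde /\
     forall x, Omega x -> forall P1 P2, GLp P1 -> GLp P2 ->
     frob P1 + frob (invmx P1) <= CP -> frob (P1 - P2) <= rtilde ->
     forall F, GLp F ->
       `| Wre W x (F *m invmx P1) - Wre W x (F *m invmx P2)
          - frob_inner (Bstress W x F P1) (P1 - P2) |
         <= CW * (Wre W x (F *m invmx P1) + 1) * frob (P1 - P2) ^+ 2).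
Proof.
move=> hdel hC4 hC5 W0 hW3 CP hCP.
pose c1 := fro (1%:M : 'M[R]_d).
have c10 : 0 <= c1 by exact: fro_ge0.
pose K2 := (c1 + 1) * CP.
have K20 : 0 < K2 by rewrite /K2 mulr_gt0 //; lra.
pose e0 := Num.min (1/2) (delta/2 : R).
have e00 : 0 < e0 by rewrite lt_min; apply/andP; split; lra.
have e0a : e0 <= 1/2 by rewrite /e0 ge_min lexx.
have e0b : e0 <= delta/2 by rewrite /e0 ge_min lexx orbT.
exists (C5 * K2 ^+ 2 * (c1 + 1) + 2 * C4 * K2 ^+ 2 + C4 * K2 * CP), (e0 / (CP + K2)).
split.
  rewrite addr_gt0 // ?mulr_gt0 // ?exprn_gt0 //; last by lra.
  by rewrite addr_gt0 // ?mulr_gt0 // ?exprn_gt0 //; lra.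
split; first by rewrite divr_gt0 // addr_gt0.
move=> x xO P1 P2 hP1 hP2 hPC hD F hF.
have uP1 : P1 \in unitmx by exact: unitmx_det_gt0.
have uP2 : P2 \in unitmx by exact: unitmx_det_gt0.
have iP1b : fro (invmx P1) <= CP := finvP_le hPC.
have hD' : fro (P1 - P2) <= e0 / (CP + K2) := hD.
have [hCPd hK2d] := split_bound hCP K20 (ltW e00) hD' (fro_ge0 _).
have hX : fro (- (invmx P1 *m (P1 - P2))) <= 1/2.
  rewrite fro_opp; apply: le_trans (fro_mul _ _) _.
  apply: le_trans e0a; apply: le_trans hCPd.
  by rewrite ler_wpM2r ?fro_ge0.
have [uY _] := inv_near1 hX.
have iP2E : invmx P2 = invmx (1%:M + - (invmx P1 *m (P1 - P2))) *m invmx P1.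
  by rewrite {1}(eP2 P2 uP1) invmxM.
have iP2b : fro (invmx P2) <= K2.
  rewrite iP2E; apply: le_trans (fro_mul _ _) _; rewrite /K2.
  by apply: ler_pM; rewrite ?fro_ge0 // fro_inv_le.
set D := P1 - P2.
set E := D *m invmx P2.
have hE : fro E <= K2 * fro D.
  by apply: le_trans (fro_mul _ _) _; rewrite mulrC ler_wpM2r ?fro_ge0.
have hEe : fro E <= e0 by apply: le_trans hE hK2d.
have hE1 : fro E <= 1/2 by apply: le_trans hEe e0a.
set G := F *m invmx P1.
have hG : GLp G by rewrite /GLp /G det_mulmx det_inv mulr_gt0 // invr_gt0.
have GLt : forall t : R, 0 <= t <= 1 -> GLp (G *m (1%:M + t *: E)).
  move=> t ht; rewrite /GLp det_mulmx mulr_gt0 //; apply: det1E_gt0.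
  by apply: le_lt_trans (fro_tE _ ht) _; apply: le_lt_trans hE1 _; lra.
have hdiff : forall t : R, 0 <= t <= 1 -> differentiable (Wre W x) (G + t *: (G *m E)).
  by move=> t ht; rewrite eGt; exact: (hW3 x xO _ (GLt t ht)).1.
have [c hc hmvt] := path_MVT hdiff.
have hc' : 0 <= c <= 1 by case/andP: hc => h1 h2; rewrite !ltW.
have hcE : fro (c *: E) <= 1/2 by apply: le_trans (fro_tE _ hc') hE1.
have [uNc hMc] := inv_near1 hcE.
have hMc2 : fro (invmx (1%:M + c *: E) - 1%:M) <= 2 * fro E.
  by apply: le_trans hMc _; rewrite ler_pM2l ?fro_tE.
have hMcb : fro (invmx (1%:M + c *: E)) <= c1 + 1 by exact: fro_inv_le.
have [_ [hS0 hW]] := hW3 x xO G hG.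
have hNd : frob ((1%:M + c *: E) - 1%:M) < delta.
  rewrite eNc; apply: le_lt_trans (fro_tE _ hc') _.
  by apply: le_lt_trans hEe _; lra.
have hS := hW _ hNd (GLt c hc').
set w := Wre W x G.
have w0 : 0 <= w by apply: fine_ge0; apply: W0.
pose S0 := G^T *m grad (Wre W x) G.
pose Sc := (G *m (1%:M + c *: E))^T *m grad (Wre W x) (G *m (1%:M + c *: E)).
have hS' : fro (Sc - S0) <= C5 * fro E * (w + 1).
  rewrite -fro_opp opprB; apply: le_trans hS _.
  by apply: bnd3 => //; rewrite ?fro_ge0 // eNc fro_tE.
have eq1 : Wre W x (F *m invmx P2) = w + frob_inner Sc (invmx (1%:M + c *: E) *m E).
  rewrite -(eGH F uP1 uP2) -/G -/D -/E.
  rewrite -(subrK (Wre W x G) (Wre W x (G + G *m E))).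
  rewrite hmvt diff_grad eGt (eHc G E uNc) fi_mulr addrC.
  by [].
have eq2 : frob_inner (Bstress W x F P1) (P1 - P2) =
    - frob_inner S0 (D *m invmx P1).
  by rewrite /Bstress -/G fiNl fi_mulTr.
rewrite eq1 eq2 -/D.
have -> : w - (w + frob_inner Sc (invmx (1%:M + c *: E) *m E)) -
      - frob_inner S0 (D *m invmx P1) =
      - frob_inner Sc (invmx (1%:M + c *: E) *m E) + frob_inner S0 (D *m invmx P1).
  by ring.
apply: mat_ii => //; try exact: ltW.
exact: iP_diff.
Qed.

End PartII3.


Theorem lemma4p5 (R : realType) (d : nat) (Omega : set 'rV[R]_d)
  (qPhi qF qP qG qgamma qtilde : R)
  (K : 'M[R]_d -> \bar R) (W : 'rV[R]_d -> 'M[R]_d -> \bar R) :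
  (* Omega: bounded open set (domain) *)
  open Omega -> bounded_set Omega ->
  (* exponents *)
  1 < qPhi -> 1 < qF -> 1 < qP -> 1 < qG -> 1 < qgamma -> d%:R < qG ->
  (* (K1) *)
  (forall P, GLp P -> K P \is a fin_num) ->
  C2_on (@GLp R d) (fun P => fine (K P)) ->
  (* (K2) *)
  d%:R < qP -> d%:R < qgamma ->
  (exists C1 C2 : R, 0 < C1 /\ 0 < C2 /\
     forall P, GLp P ->
       ((C1 * (frob P `^ qP + (\det P) `^ (- qgamma)) - C2)%:E <= K P)%E) ->
  (* W : Omega x R^{dxd} -> [0, +oo], finite iff F in GL^+(d) *)
  (forall x, Omega x -> forall F, (0 <= W x F)%E) ->
  (forall x, Omega x -> forall F, W x F \is a fin_num <-> GLp F) ->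
  (* (W1) *)
  d%:R < qF ->
  (exists (j : 'rV[R]_d -> R) (C3 : R), 0 < C3 /\
     forall x, Omega x -> forall F,
       ((j x + C3 * frob F `^ qF)%:E <= W x F)%E) ->
  (* (W2) *)
  (exists WW : 'rV[R]_d -> 'rV[R]_(mu d) -> \bar R,
     (forall x, Omega x -> forall F, W x F = WW x (minors F)) /\
     (forall x, Omega x -> forall y, (-oo < WW x y)%E) /\
     (forall x, Omega x -> econvex (WW x)) /\
     (forall x, Omega x -> lower_semicontinuous (WW x))) ->
  (* (W3) *)
  (exists delta C4 C5 : R, 0 < delta /\ 0 < C4 /\ 0 < C5 /\
     forall x, Omega x -> forall F, GLp F ->
       differentiable (Wre W x) F /\
       frob (F^T *m grad (Wre W x) F) <= C4 * (Wre W x F + 1) /\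
       forall N, frob (N - 1%:M) < delta -> GLp (F *m N) ->
         frob (F^T *m grad (Wre W x) F
               - (F *m N)^T *m grad (Wre W x) (F *m N))
           <= C5 * frob (N - 1%:M) * (Wre W x F + 1)) ->
  (* exponent relations *)
  qPhi^-1 = qF^-1 + qP^-1 -> d%:R < qPhi ->
  d%:R < qtilde -> qtilde^-1 = 2 / qgamma + qG^-1 ->
  (* (i) *)
  (forall CP : R, 0 < CP -> exists CB rbar : R, 0 < CB /\ 0 < rbar /\
     forall x, Omega x -> forall P, GLp P -> frob P + frob (invmx P) <= CP ->
     forall F, GLp F -> forall N : 'M[R]_d, frob (N - 1%:M) < rbar ->
       frob (Bstress W x F (N *m P) - Bstress W x F P)
         <= CB * frob (N - 1%:M) * (Wre W x (F *m invmx P) + 1))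
  /\
  (* (ii) *)
  (forall CP : R, 0 < CP -> exists CW rtilde : R, 0 < CW /\ 0 < rtilde /\
     forall x, Omega x -> forall P1 P2, GLp P1 -> GLp P2 ->
     frob P1 + frob (invmx P1) <= CP -> frob (P1 - P2) <= rtilde ->
     forall F, GLp F ->
       `| Wre W x (F *m invmx P1) - Wre W x (F *m invmx P2)
          - frob_inner (Bstress W x F P1) (P1 - P2) |
         <= CW * (Wre W x (F *m invmx P1) + 1) * frob (P1 - P2) ^+ 2).
Proof.
move=> _ _ _ _ _ _ _ _ _ _ _ _ _ W0 _ _ _ _ [delta [C4 [C5 [hd [h4 [h5 hW3]]]]]] _ _ _ _.
split; [exact: (part_i hd h4 h5 W0 hW3) | exact: (part_ii hd h4 h5 W0 hW3)].
Qed.
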